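(* Let $p$ be an odd prime, let $G_p=V\rtimes C$ be as described in the context, and let $c$ be a fixed generator of $C$. Let $X=\{c,w_2,\dots,w_n\}$ where $w_2,\dots,w_n\in V$, and assume $X$ generates $G_p$. Then every $v\in V$ can be written as a word of length at most $3(p-1)$ in $X$ (inverses permitted) in which the elements $w_2,\dots,w_n$ occur a total of at most $p-1$ times.
   Context: The wreath product $W_p=C_2\wr C_p$ is $U\rtimes C_p$ with $U=\mathbb{F}_2^{\,p}$ and a generator of the cyclic group $C_p$ of order $p$ acting on $U$ by cyclically permuting coordinates. Its center is $T=\{(0,\dots,0),(1,\dots,1)\}$, and $G_p=W_p/T=V\rtimes C$, where $V=U/T$ is an $\mathbb{F}_2$-vector space of dimension $p-1$ (a normal subgroup of $G_p$) and $C$, the image of $C_p$, is cyclic of order $p$. *)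

(* Defs.v *)
(* Concrete model of W_p = C_2 wr C_p and G_p = W_p / T. *)
From mathcomp Require Import all_boot.
Set Implicit Arguments. Unset Strict Implicit. Unset Printing Implicit Defensive.

(* U = F_2^p, coordinates indexed by 'I_p, F_2 modelled by bool with xor. *)
Definition U (p : nat) := {ffun 'I_p -> bool}.

(* The generator of C_p acts by cyclically permuting coordinates:
   (shift u) i = u (i - 1 mod p). *)
Definition shift (p : nat) (u : U p) : U p := [ffun i => u (ord_pred i)].

(* Elements of W_p = U x| C_p: pairs (u, a), a read modulo p;
   (u, a) * (v, b) = (u + c^a . v, a + b). *)
Definition W (p : nat) := (U p * nat)%type.

Definition wmul (p : nat) (x y : W p) : W p :=
  ([ffun i => x.1 i (+) iter x.2 (@shift p) y.1 i], (x.2 + y.2) %% p).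

Definition wone (p : nat) : W p := ([ffun => false], 0).

Definition winv (p : nat) (x : W p) : W p :=
  let b := (p - x.2 %% p) %% p in (iter b (@shift p) x.1, b).

(* Equality in G_p = W_p / T, T = {0, (1,...,1)}: same C_p-component mod p
   and U-components differing by an element of T. *)
Definition eqG (p : nat) (x y : W p) : bool :=
  (x.2 == y.2 %[mod p]) && ((x.1 == y.1) || (x.1 == [ffun i => y.1 i (+) true])).

(* A letter (e, i) denotes the i-th generator of a list xs, inverted iff e. *)
Definition letter := (bool * nat)%type.

Definition eval_word (p : nat) (xs : seq (W p)) (w : seq letter) : W p :=
  foldr (fun l acc =>
           wmul (let g := nth (wone p) xs l.2 in if l.1 then winv g else g) acc)
        (wone p) w.

Definition word_over (n : nat) (w : seq letter) : bool := all (fun l => l.2 < n) w.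

(* The generating list X = (c, w_2, ..., w_n) with c = image of (0, k) in C
   and w_j = image of (w_j, 0) in V. *)
Definition gens (p k : nat) (ws : seq (U p)) : seq (W p) :=
  ([ffun => false], k) :: [seq (w, 0) | w <- ws].

Definition generates (p : nat) (xs : seq (W p)) : Prop :=
  forall g : W p, exists w, word_over (size xs) w /\ eqG (eval_word xs w) g.

(* Main.v *)
Require Import Defs.
From mathcomp Require Import all_boot.
From mathcomp Require Import zify.
Set Implicit Arguments. Unset Strict Implicit. Unset Printing Implicit Defensive.

Lemma iter_shift_spec p (a : nat) (u : U p) (i j : 'I_p) :
  (j + a) %% p = i -> iter a (@shift p) u i = u j.
Proof.
elim: a i => [|a IH] i /=.
  by rewrite addn0 modn_small // => /val_inj ->.
move=> hji; rewrite /shift ffunE; apply: IH => /=.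
have p0 : 0 < p by exact: (leq_ltn_trans (leq0n _) (ltn_ord i)).
rewrite -hji.
have e : forall x, (x + p).-1 = x + (p - 1) by move=> x; clear -p0; lia.
rewrite e.
rewrite modnDml.
have -> : j + a.+1 + (p - 1) = j + a + p by clear -p0; lia.
by rewrite modnDr.
Qed.

Definition rot p (p0 : 0 < p) (a : nat) (i : 'I_p) : 'I_p :=
  Ordinal (ltn_pmod (i + (p - a %% p)) p0).

Lemma rotP p (p0 : 0 < p) a (i : 'I_p) : (rot p0 a i + a) %% p = i.
Proof.
change (((i + (p - a %% p)) %% p + a) %% p = i).
rewrite modnDml -addnA.
have -> : p - a %% p + a = p + a %/ p * p.
  move: (divn_eq a p) (ltn_pmod a p0); move: (a %/ p) (a %% p) => q r.
  clear i. nia.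
by rewrite addnA addnC modnMDl modnDr modn_small.
Qed.

Lemma iter_shiftE p (p0 : 0 < p) a (u : U p) i :
  iter a (@shift p) u i = u (rot p0 a i).
Proof. exact/iter_shift_spec/rotP. Qed.

Lemma iter_shift_p p (p0 : 0 < p) (u : U p) : iter p (@shift p) u = u.
Proof.
apply/ffunP => i; rewrite (iter_shiftE p0); congr (u _); apply: val_inj => /=.
by rewrite modnn subn0 modnDr modn_small.
Qed.

Lemma iter_shift_mod p (p0 : 0 < p) a b (u : U p) :
  a = b %[mod p] -> iter a (@shift p) u = iter b (@shift p) u.
Proof.
move=> hab; apply/ffunP => i; rewrite !(iter_shiftE p0); congr (u _).
by apply: val_inj => /=; rewrite hab.
Qed.

Definition wv p (ws : seq (U p)) (j : nat) : U p := nth [ffun => false] ws j.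

Definition fam p k (ws : seq (U p)) (x : 'I_p * 'I_(size ws)) : U p :=
  iter (k * x.1) (@shift p) (wv ws x.2).
Arguments fam {p} k ws x.

Definition sumU p k (ws : seq (U p)) (S : {set 'I_p * 'I_(size ws)}) : U p :=
  [ffun i => \big[addb/false]_x ((x \in S) && fam k ws x i)].
Arguments sumU {p} k ws S.

Definition eqT p (u v : U p) := exists b : bool, u = [ffun i => v i (+) b].

Lemma eqT_refl p (u : U p) : eqT u u.
Proof. by exists false; apply/ffunP => i; rewrite ffunE addbF. Qed.

Lemma eqT_trans p (u v w : U p) : eqT u v -> eqT v w -> eqT u w.
Proof.
move=> [b1 ->] [b2 ->]; exists (b2 (+) b1); apply/ffunP => i.
by rewrite !ffunE addbA.
Qed.

Lemma sumU_ext p k (ws : seq (U p)) (A B C : {set 'I_p * 'I_(size ws)}) :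
  (forall x, (x \in C) = (x \in A) (+) (x \in B)) ->
  sumU k ws C = [ffun i => sumU k ws A i (+) sumU k ws B i].
Proof.
move=> hC; apply/ffunP => i; rewrite !ffunE -big_split /=.
by apply: eq_bigr => x _; rewrite hC; case: (x \in A); case: (x \in B); case: (fam k ws x i).
Qed.

Lemma sumU0 p k (ws : seq (U p)) : sumU k ws set0 = [ffun => false] :> U p.
Proof. by apply/ffunP => i; rewrite !ffunE big1 // => x _; rewrite inE. Qed.

Lemma sumU1 p k (ws : seq (U p)) (x0 : 'I_p * 'I_(size ws)) : sumU k ws [set x0] = fam k ws x0.
Proof.
apply/ffunP => i; rewrite ffunE (bigD1 x0) //= inE eqxx /= big1 ?addbF // => x hx.
by rewrite inE (negbTE hx).
Qed.

Definition sig p (p0 : 0 < p) n (m : nat) (x : 'I_p * 'I_n) : 'I_p * 'I_n :=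
  (Ordinal (ltn_pmod (x.1 + m) p0), x.2).

Lemma sig_inj p (p0 : 0 < p) n m : injective (@sig p p0 n m).
Proof.
move=> [a1 b1] [a2 b2] [] h1 ->; congr (_, _); apply: val_inj => /=.
move/eqP: h1; rewrite eqn_modDr (modn_small (ltn_ord a1)) (modn_small (ltn_ord a2)).
by move/eqP.
Qed.

Lemma sumU_shift p (p0 : 0 < p) k (ws : seq (U p)) m (S : {set 'I_p * 'I_(size ws)}) :
  iter (k * m) (@shift p) (sumU k ws S) = sumU k ws (sig p0 m @: S).
Proof.
apply/ffunP => i; rewrite (iter_shiftE p0) !ffunE.
rewrite [RHS](reindex_inj (@sig_inj p p0 _ m)) /=.
apply: eq_bigr => x _; rewrite mem_imset; last exact: sig_inj.
congr (_ && _); rewrite -(iter_shiftE p0) /fam /= -iterD.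
apply: (congr1 (fun f : U p => f i)); apply: (iter_shift_mod p0).
by rewrite modnMmr mulnDr addnC.
Qed.

Lemma eval2_lt p (p0 : 0 < p) (xs : seq (W p)) w : (eval_word xs w).2 < p.
Proof. by case: w => [|l w] //=; rewrite ltn_pmod. Qed.

Lemma iter_shift0 p (p0 : 0 < p) a : iter a (@shift p) [ffun => false] = [ffun => false].
Proof. by apply/ffunP => i; rewrite (iter_shiftE p0) !ffunE. Qed.

Lemma modinv p (p0 : 0 < p) k : (p - k %% p) %% p = k * (p - 1) %[mod p].
Proof.
have e1 : (p - k %% p + k) %% p = 0.
  by rewrite -modnDmr subnK ?modnn // ltnW // ltn_pmod.
have e2 : (k * (p - 1) + k) %% p = 0 by rewrite -mulnSr subn1 prednK // modnMl.
by apply/eqP; rewrite -(eqn_modDr k) modnDml e1 e2.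
Qed.

Lemma span_word p (p0 : 0 < p) k (ws : seq (U p)) w :
  word_over (size ws).+1 w -> exists S, (eval_word (gens k ws) w).1 = sumU k ws S.
Proof.
elim: w => [|[b j] w IH] /=.
  by move=> _; exists set0; rewrite sumU0.
move/andP => [hj /IH [S hS]].
case: j hj => [|j] hj.
  case: b.
    exists (sig p0 (p - 1) @: S); rewrite -sumU_shift -hS; apply/ffunP => i.
    rewrite /= !ffunE iter_shift0 // ffunE /=.
    by apply: (congr1 (fun f : U p => f i)); apply: (iter_shift_mod p0); apply: modinv.
  exists (sig p0 1 @: S); rewrite -sumU_shift -hS muln1; apply/ffunP => i.
  by rewrite /= !ffunE.
have hj' : j < size ws by [].
have hg : nth (wone p) (gens k ws) j.+1 = (wv ws j, 0).
  by rewrite /= (nth_map [ffun => false]).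
pose x0 : 'I_p * 'I_(size ws) := (Ordinal p0, Ordinal hj').
exists [set x | (x == x0) (+) (x \in S)].
rewrite (@sumU_ext _ _ _ [set x0] S) => [|x]; last by rewrite !inE.
rewrite sumU1 -hS hg; apply/ffunP => i.
case: b; rewrite /= !ffunE /fam /= muln0 //.
by rewrite mod0n subn0 modnn.
Qed.

Lemma reduce p (p0 : 0 < p) k (ws : seq (U p)) (S : {set 'I_p * 'I_(size ws)}) :
  exists S' : {set 'I_p * 'I_(size ws)}, #|S'| <= p - 1 /\ eqT (sumU k ws S') (sumU k ws S).
Proof.
move: {2}#|S|.+1 (ltnSn #|S|) => n; elim: n S => [|n IH] S // hS.
case: (leqP #|S| (p - 1)) => hSp.
  by exists S; split => //; apply: eqT_refl.
pose i0 : 'I_p := Ordinal p0.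
pose nrm (u : U p) : U p := if u i0 then [ffun i => u i (+) true] else u.
have nrmE : forall u i, nrm u i = u i (+) u i0.
  by move=> u i; rewrite /nrm; case: (u i0); rewrite ?ffunE ?addbF.
pose g (A : {set 'I_p * 'I_(size ws)}) := nrm (sumU k ws A).
have [A [B [hA [hB [hAB hg]]]]] :
    exists A B : {set 'I_p * 'I_(size ws)}, A \subset S /\ B \subset S /\ A != B /\ g A = g B.
  case: (boolP [exists A in powerset S, exists B in powerset S, (A != B) && (g A == g B)]).
    move=> /exists_inP [A hA /exists_inP [B hB /andP [h1 /eqP h2]]].
    by exists A, B; rewrite -!powersetE.
  move=> hne; exfalso.
  have inj : {in powerset S &, injective g}.
    move=> A B hA hB hgAB; apply/eqP; apply: contraNT hne => hAB.
    apply/exists_inP; exists A => //; apply/exists_inP; exists B => //.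
    by rewrite hAB hgAB eqxx.
  have c1 : #|g @: powerset S| = 2 ^ #|S| by rewrite card_in_imset // card_powerset.
  have c2 : g @: powerset S \subset [set u : U p | ~~ u i0].
    apply/subsetP => u /imsetP [A _ ->]; rewrite inE /g nrmE.
    by case: (sumU k ws A i0).
  have c3 : [set u : U p | ~~ u i0] \proper [set: U p].
    rewrite properT; apply/eqP => h.
    by have := in_setT ([ffun => true] : U p); rewrite -h inE ffunE.
  have := leq_ltn_trans (subset_leq_card c2) (proper_card c3).
  rewrite c1 cardsT card_ffun card_bool card_ord ltnNge => /negP; apply.
  rewrite leq_pexp2l //; clear -p0 hSp; lia.
pose R := [set x | (x \in A) (+) (x \in B)].
have hRAB := @sumU_ext _ k ws A B R (fun x => ltac:(by rewrite inE)).
pose b := sumU k ws A i0 (+) sumU k ws B i0.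
have hRb : forall i, sumU k ws R i = b.
  move=> i; rewrite hRAB ffunE /b.
  have := congr1 (fun f : U p => f i) hg; rewrite /g !nrmE.
  by case: (sumU k ws A i); case: (sumU k ws B i); case: (sumU k ws A i0); case: (sumU k ws B i0).
have RS : R \subset S.
  apply/subsetP => x; rewrite inE.
  by case hxA: (x \in A); case hxB: (x \in B) => //= _;
    [apply: (subsetP hA) | apply: (subsetP hB)].
pose S' := S :\: R.
have hS' : eqT (sumU k ws S') (sumU k ws S).
  exists b; rewrite (@sumU_ext _ k ws S R S') => [|x].
    by apply/ffunP => i; rewrite [LHS]ffunE [RHS]ffunE hRb.
  rewrite in_setD; case hxR: (x \in R) => /=; last by rewrite addbF.
  by rewrite (subsetP RS x hxR).
have R0 : 0 < #|R|.
  case: (pickP [pred x | (x \in A) (+) (x \in B)]) => [x hx | h0].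
    by apply/card_gt0P; exists x; rewrite inE.
  case/negP: hAB; apply/eqP/setP => x; have := h0 x; rewrite /=.
  by case: (x \in A); case: (x \in B).
have cS' : #|S'| < n.
  rewrite cardsDS //; have : #|R| <= #|S| := subset_leq_card RS.
  clear -R0 hS; lia.
have [S'' [h1 h2]] := IH S' cS'.
by exists S''; split => //; apply: eqT_trans h2 hS'.
Qed.

Definition block p (ws : seq (U p)) (S : {set 'I_p * 'I_(size ws)}) (t : nat) : seq letter :=
  [seq (false, (val x.2).+1) | x <- [seq x <- enum S | val x.1 == t]] ++ [:: (false, 0)].

Definition bword p (ws : seq (U p)) (S : {set 'I_p * 'I_(size ws)}) (a m : nat) : seq letter :=
  flatten [seq block S t | t <- iota a m].

Lemma eval_cons p (xs : seq (W p)) l w :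
  eval_word xs (l :: w) =
  wmul (let g := nth (wone p) xs l.2 in if l.1 then winv g else g) (eval_word xs w).
Proof. by []. Qed.

Lemma eval_letters p (p0 : 0 < p) k (ws : seq (U p)) (xs : seq ('I_p * 'I_(size ws))) rest :
  eval_word (gens k ws) ([seq (false, (val x.2).+1) | x <- xs] ++ rest) =
  ([ffun i => \big[addb/false]_(x <- xs) wv ws x.2 i (+) (eval_word (gens k ws) rest).1 i],
   (eval_word (gens k ws) rest).2).
Proof.
elim: xs => [|x xs IH].
  rewrite /=; case: (eval_word _ rest) => u a /=; congr (_, _).
  by apply/ffunP => i; rewrite ffunE big_nil.
rewrite map_cons cat_cons eval_cons IH /wmul /= (nth_map [ffun => false]) //=.
congr (_, _); first by apply/ffunP => i; rewrite !ffunE big_cons addbA.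
by rewrite add0n modn_small // eval2_lt.
Qed.

Lemma eval_bword p (p0 : 0 < p) k (ws : seq (U p)) (S : {set 'I_p * 'I_(size ws)}) m a :
  eval_word (gens k ws) (bword S a m) =
  ([ffun i => \big[addb/false]_x ((x \in S) && (a <= x.1 < a + m) &&
                 iter (k * (x.1 - a)) (@shift p) (wv ws x.2) i)], (k * m) %% p).
Proof.
elim: m a => [|m IH] a.
  rewrite /bword /= muln0 mod0n; congr (_, _); apply/ffunP => i; rewrite !ffunE big1 // => x _.
  by rewrite addn0; case: leqP; rewrite ?andbF.
have -> : bword S a m.+1 =
    [seq (false, (val x.2).+1) | x <- [seq x <- enum S | val x.1 == a]] ++
    ((false, 0) :: bword S a.+1 m) by rewrite /bword /= /block -catA.
rewrite eval_letters // eval_cons IH /wmul /=; congr (_, _); last first.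
  by rewrite modnDmr mulnS.
apply/ffunP => i; rewrite !ffunE (iter_shiftE p0) ffunE big_filter big_enum_cond.
rewrite big_mkcond addFb -big_split /=; apply: eq_bigr => x _.
rewrite -(iter_shiftE p0) -iterD.
case: (x \in S) => //=.
case: (ltngtP x.1 a) => h //=.
  by rewrite addSnnS -mulnS subnSK.
by rewrite h subnn muln0 addnS ltnS leq_addr /= addbF.
Qed.

Lemma sumn_mapD (T : Type) (f g : T -> nat) r :
  sumn [seq f t + g t | t <- r] = sumn [seq f t | t <- r] + sumn [seq g t | t <- r].
Proof. by elim: r => //= t r ->; rewrite addnACA. Qed.

Lemma sumn_count (T : Type) (P : pred T) r : sumn [seq nat_of_bool (P t) | t <- r] = count P r.
Proof. by elim: r => //= t r ->. Qed.

Lemma sumn_const1 (T : Type) (r : seq T) : sumn [seq 1 | t <- r] = size r.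
Proof. by elim: r => //= t r ->. Qed.

Lemma sum_count p n (s : seq ('I_p * 'I_n)) :
  sumn [seq count (fun x : 'I_p * 'I_n => val x.1 == t) s | t <- iota 0 p] = size s.
Proof.
elim: s => [|x s IH] /=.
  by elim: (iota 0 p) => //= t r ->.
rewrite sumn_mapD IH sumn_count addnC -addn1; congr (_ + _).
have -> : count (eq_op (val x.1)) (iota 0 p) = count_mem (val x.1) (iota 0 p).
  by apply: eq_count => t /=; rewrite eq_sym.
by rewrite count_uniq_mem ?iota_uniq // mem_iota /= ltn_ord.
Qed.

Lemma count_block p (ws : seq (U p)) (S : {set 'I_p * 'I_(size ws)}) t :
  count (fun l : letter => l.2 != 0) (block S t) = count (fun x : 'I_p * 'I_(size ws) => val x.1 == t) (enum S).
Proof.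
rewrite count_cat /= count_map (@eq_count _ _ predT) ?count_predT ?size_filter ?addn0 //.
Qed.

Lemma size_block p (ws : seq (U p)) (S : {set 'I_p * 'I_(size ws)}) t :
  size (block S t) = count (fun x : 'I_p * 'I_(size ws) => val x.1 == t) (enum S) + 1.
Proof. by rewrite size_cat size_map size_filter. Qed.

Lemma bword_count p (ws : seq (U p)) (S : {set 'I_p * 'I_(size ws)}) :
  count (fun l : letter => l.2 != 0) (bword S 0 p) = #|S|.
Proof.
rewrite /bword count_flatten -map_comp (eq_map (@count_block p ws S)).
by rewrite sum_count cardE.
Qed.

Lemma bword_size p (ws : seq (U p)) (S : {set 'I_p * 'I_(size ws)}) :
  size (bword S 0 p) = #|S| + p.
Proof.
rewrite /bword size_flatten /shape -map_comp (eq_map (@size_block p ws S)).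
by rewrite sumn_mapD sum_count sumn_const1 size_iota cardE.
Qed.

Lemma bword_over p (ws : seq (U p)) (S : {set 'I_p * 'I_(size ws)}) :
  word_over (size ws).+1 (bword S 0 p).
Proof.
apply/allP => l /flattenP [blk /mapP [t _ ->]].
rewrite mem_cat => /orP [/mapP [x _ ->] | ] /=; first by rewrite ltnS ltn_ord.
by rewrite inE => /eqP ->.
Qed.

Unset Implicit Arguments.

Theorem lemma5 (p : nat) (hp : prime p) (hodd : odd p)
  (k : nat) (hk : ~~ (p %| k)) (ws : seq (U p))
  (hgen : generates (gens k ws)) :
  forall v : U p, exists w : seq letter,
    [/\ word_over (size ws).+1 w,
        size w <= 3 * (p - 1),
        count (fun l : letter => l.2 != 0) w <= p - 1
      & eqG (eval_word (gens k ws) w) (v, 0)].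
Proof.
move=> v.
have p0 : 0 < p := prime_gt0 hp.
have p1 : 1 < p := prime_gt1 hp.
have [w [hw hev]] := hgen (v, 0).
rewrite /= size_map in hw.
have [S hS] := span_word p0 k hw.
have hSv : eqT (sumU k ws S) v.
  move: hev; rewrite /eqG hS => /andP [_ /orP [/eqP -> | /eqP ->]].
    by exists false; apply/ffunP => i; rewrite ffunE addbF.
  by exists true.
have [S' [hc he]] := reduce p0 k S.
have [b hb] := eqT_trans he hSv.
exists (bword S' 0 p); split.
- exact: bword_over.
- rewrite bword_size; clear -hc p1; lia.
- by rewrite bword_count.
rewrite (eval_bword p0) /eqG /= modnMl mod0n eqxx /=.
have -> : [ffun i => \big[addb/false]_x ((x \in S') && (0 <= x.1 < 0 + p) &&
             iter (k * (x.1 - 0)) (@shift p) (wv ws x.2) i)] = sumU k ws S'.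
  apply/ffunP => i; rewrite !ffunE; apply: eq_bigr => x _.
  by rewrite add0n ltn_ord subn0 andbT leq0n andbT.
rewrite hb; case: b {hb}; apply/orP; [right | left] => //.
by apply/eqP/ffunP => i; rewrite ffunE addbF.
Qed.
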